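(* In the discrete setting described in the context, let $x_1,\dots,x_k\in\mathrm{dom}\,\partial l$ be arbitrary, and for each $i\ge1$ let $u_i\in\partial f(x_i)=\nabla g(x_i)+\partial l(x_i)$ and $$E_i:=A_i\Bigl\langle u_i,\;x_i-\frac{a_i}{A_i}z_i-\frac{A_{i-1}}{A_i}x_{i-1}\Bigr\rangle-\frac{\gamma}{q}\|z_i-z_{i-1}\|^q.$$ Then for all $k\ge1$, $$A_kf(x_k)-\psi_k(z_k)\le\sum_{i=1}^kE_i.$$
   Context: $\|\cdot\|$ is a norm on $\mathbb{R}^d$. A function $\varphi:\mathbb{R}^d\to\mathbb{R}\cup\{+\infty\}$ is $(s,\sigma)$-uniformly convex w.r.t. $\|\cdot\|$ ($s\ge2$, $\sigma>0$) if $\varphi(y)\ge\varphi(x)+\langle\zeta,y-x\rangle+\frac{\sigma}{s}\|y-x\|^s$ for all $y$, all $x$ with $\partial\varphi(x)\ne\emptyset$ and all $\zeta\in\partial\varphi(x)$. $f=g+l$ with $g:\mathbb{R}^d\to\mathbb{R}$ convex and differentiable and $l:\mathbb{R}^d\to\mathbb{R}\cup\{+\infty\}$ proper, closed, convex. $\hat f(x;y):=g(y)+\langle\nabla g(y),x-y\rangle+l(x)$. Fix $q\ge2$, $\gamma>0$, $x_0\in\mathrm{dom}\,l$, and $h(\cdot;x_0):\mathbb{R}^d\to\mathbb{R}$ convex with $h(x;x_0)\ge0$, $h(x;x_0)=0$ iff $x=x_0$, and $h(\cdot;x_0)$ $(q,\gamma)$-uniformly convex w.r.t. $\|\cdot\|$.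 Let $a_1,a_2,\dots>0$, $A_0:=0$, $A_i:=A_{i-1}+a_i$. Set $\psi_0:=h(\cdot;x_0)$, $\psi_k(x):=\sum_{i=1}^ka_i\hat f(x;x_i)+h(x;x_0)$, $z_0:=x_0$, and for $k\ge1$ let $z_k$ be the unique minimizer of $\psi_k$. *)

(* Defs.v *)
From Stdlib Require Import Reals Lra.
From mathcomp Require Import ssreflect ssrfun ssrbool eqtype ssrnat fintype bigop.
Set Implicit Arguments.
Unset Strict Implicit.
Local Open Scope R_scope.

Definition vec (d : nat) := 'I_d -> R.
Definition vadd {d} (x y : vec d) : vec d := fun i => x i + y i.
Definition vsub {d} (x y : vec d) : vec d := fun i => x i - y i.
Definition vscale {d} (c : R) (x : vec d) : vec d := fun i => c * x i.
Definition vzero {d} : vec d := fun _ => 0.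
Definition inner {d} (x y : vec d) : R := \big[Rplus/R0]_(i < d) (x i * y i).

Definition is_norm {d} (N : vec d -> R) : Prop :=
  (forall x, 0 <= N x) /\
  (forall x, N x = 0 -> x = vzero) /\
  (forall c x, N (vscale c x) = Rabs c * N x) /\
  (forall x y, N (vadd x y) <= N x + N y).

(* real power t^s for t >= 0, s > 0 (with 0^s = 0) *)
Definition rpow (t s : R) : R := if Rle_dec t 0 then 0 else Rpower t s.

(* ---------- extended reals R ∪ {+oo}: None = +oo ---------- *)
Definition ER := option R.
Definition ele (a b : ER) : Prop :=
  match a, b with
  | _, None => True
  | None, Some _ => False
  | Some x, Some y => x <= y
  end.
Definition eplus (a b : ER) : ER :=
  match a, b with Some x, Some y => Some (x + y) | _, _ => None end.
Definition escale (c : R) (a : ER) : ER :=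
  match a with Some x => Some (c * x) | None => None end.

Definition efun d := vec d -> ER.

Definition in_dom {d} (phi : efun d) (x : vec d) : Prop := exists r, phi x = Some r.
Definition proper {d} (phi : efun d) : Prop := exists x, in_dom phi x.

(* convexity (for t in (0,1), avoiding 0 * oo) *)
Definition econvex {d} (phi : efun d) : Prop :=
  forall x y t, 0 < t < 1 ->
    ele (phi (vadd (vscale t x) (vscale (1 - t) y)))
        (eplus (escale t (phi x)) (escale (1 - t) (phi y))).
Definition rconvex {d} (phi : vec d -> R) : Prop :=
  forall x y t, 0 <= t <= 1 ->
    phi (vadd (vscale t x) (vscale (1 - t) y)) <= t * phi x + (1 - t) * phi y.

(* closed = lower semicontinuous = all sublevel sets closed (sequentially,
   coordinatewise convergence in R^d) *)
Definition vcv {d} (y : nat -> vec d) (x : vec d) : Prop :=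
  forall i, Un_cv (fun n => y n i) (x i).
Definition eclosed {d} (phi : efun d) : Prop :=
  forall (y : nat -> vec d) x alpha, vcv y x ->
    (forall n, ele (phi (y n)) (Some alpha)) -> ele (phi x) (Some alpha).

Definition subgrad {d} (phi : efun d) (x zeta : vec d) : Prop :=
  exists fx, phi x = Some fx /\
    forall y, ele (Some (fx + inner zeta (vsub y x))) (phi y).
Definition in_dom_subdiff {d} (phi : efun d) (x : vec d) : Prop :=
  exists zeta, subgrad phi x zeta.

Definition unif_convex {d} (N : vec d -> R) (s sigma : R) (phi : efun d) : Prop :=
  forall x y zeta fx, phi x = Some fx -> subgrad phi x zeta ->
    ele (Some (fx + inner zeta (vsub y x) + sigma / s * rpow (N (vsub y x)) s)) (phi y).

(* gradient (Frechet derivative w.r.t. N; all norms on R^d are equivalent) *)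
Definition is_gradient {d} (N : vec d -> R) (g : vec d -> R) (G : vec d -> vec d) : Prop :=
  forall x eps, 0 < eps -> exists delta, 0 < delta /\
    forall hh, N hh < delta ->
      Rabs (g (vadd x hh) - g x - inner (G x) hh) <= eps * N hh.

Definition fsum {d} (g : vec d -> R) (l : efun d) : efun d :=
  fun x => eplus (Some (g x)) (l x).
Definition fhat {d} (g : vec d -> R) (G : vec d -> vec d) (l : efun d)
  (x y : vec d) : ER :=
  eplus (Some (g y + inner (G y) (vsub x y))) (l x).

Fixpoint Acum (a : nat -> R) (k : nat) : R :=
  match k with O => 0 | S k' => Acum a k' + a (S k') end.

Fixpoint psi {d} (g : vec d -> R) (G : vec d -> vec d) (l : efun d)
  (h : vec d -> R) (a : nat -> R) (xs : nat -> vec d) (k : nat) : efun d :=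
  match k with
  | O => fun x => Some (h x)
  | S k' => fun x => eplus (psi g G l h a xs k' x)
                           (escale (a (S k')) (fhat g G l x (xs (S k'))))
  end.

Fixpoint sum1 (F : nat -> R) (k : nat) : R :=
  match k with O => 0 | S k' => sum1 F k' + F (S k') end.

(* Main.v *)
Require Import Defs.
From Stdlib Require Import Reals Lra FunctionalExtensionality.
From HB Require Import structures.
From mathcomp Require Import ssreflect ssrfun ssrbool eqtype ssrnat seq fintype bigop.
Import Defs.
Local Open Scope R_scope.

HB.instance Definition _ := Monoid.isComLaw.Build R 0 Rplus
  (fun a b c => esym (Rplus_assoc a b c)) Rplus_comm Rplus_0_l.

Lemma big_scaleR (I : Type) (r : seq I) (c : R) (F : I -> R) :
  \big[Rplus/0]_(i <- r) (c * F i) = c * \big[Rplus/0]_(i <- r) F i.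
Proof.
elim: r => [|x r IH]; first by rewrite !big_nil; ring.
by rewrite !big_cons IH; ring.
Qed.

Lemma inner_comb {d} (u x y v : vec d) a b :
  (forall i, v i = a * x i + b * y i) -> inner u v = a * inner u x + b * inner u y.
Proof.
move=> Hv; rewrite /inner.
rewrite (eq_bigr (fun i => a * (u i * x i) + b * (u i * y i))); last first.
  by move=> i _; rewrite Hv; ring.
by rewrite big_split /= !big_scaleR.
Qed.

Lemma inner_comm {d} (u v : vec d) : inner u v = inner v u.
Proof. by rewrite /inner; apply: eq_bigr => i _; ring. Qed.

Lemma inner_zero {d} (u v : vec d) : (forall i, v i = 0) -> inner u v = 0.
Proof.
move=> Hv; rewrite (@inner_comb d u v v v 0 0); first ring.
by move=> i; rewrite Hv; ring.
Qed.

Lemma inner_addl {d} (u1 u2 v : vec d) : inner (vadd u1 u2) v = inner u1 v + inner u2 v.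
Proof.
rewrite inner_comm (@inner_comb d v u1 u2 (vadd u1 u2) 1 1); last by move=> i; rewrite /vadd; ring.
by rewrite !(inner_comm v); ring.
Qed.

Lemma inner_basis {d} (u v : vec d) (j : 'I_d) al :
  inner (fun i => u i + (if i == j then al else 0)) v = inner u v + al * v j.
Proof.
rewrite /inner.
rewrite (eq_bigr (fun i => u i * v i + (if i == j then al else 0) * v i)); last first.
  by move=> i _; ring.
rewrite big_split /=; congr (_ + _).
rewrite (bigD1 j) //= eqxx big1 /=; first ring.
by move=> i /negbTE ->; ring.
Qed.

Lemma div_helper (hx Fy Fy' s s' : R) : 0 < s -> 0 < s' ->
  hx <= s' / (s + s') * Fy + (1 - s' / (s + s')) * Fy' ->
  (hx - Fy') / s' <= (Fy - hx) / s.
Proof.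
move=> Hs Hs' H.
have H2 : (s + s') * hx <= s' * Fy + s * Fy'.
  have := Rmult_le_compat_l (s + s') _ _ (ltac:(lra) : 0 <= s + s') H.
  have -> : (s + s') * (s' / (s + s') * Fy + (1 - s' / (s + s')) * Fy') = s' * Fy + s * Fy'.
    by field; lra.
  done.
set p := (hx - Fy') / s'. set p2 := (Fy - hx) / s.
have E1 : hx - Fy' = p * s' by rewrite /p; field; lra.
have E2 : Fy - hx = p2 * s by rewrite /p2; field; lra.
have Hss : 0 < s * s' by apply: Rmult_lt_0_compat.
nra.
Qed.

Lemma subgrad_exists {d} (h : vec d -> R) : rconvex h ->
  forall x, exists ze : vec d, forall y, h x + inner ze (vsub y x) <= h y.
Proof.
move=> Hc x.
suff: forall m, (m <= d)%N -> exists ze : vec d, forall y,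
   (forall i : 'I_d, (m <= i)%N -> y i = x i) -> h x + inner ze (vsub y x) <= h y.
  move=> /(_ d (leqnn d)) [ze Hze]; exists ze => y; apply: Hze => i Hi.
  by have := ltn_ord i; rewrite ltnNge Hi.
elim=> [|m IH] Hm.
  exists (fun _ => 0) => y Hy.
  have -> : y = x by apply: functional_extensionality => i; apply: Hy.
  rewrite inner_zero; first lra.
  by move=> i; rewrite /vsub; ring.
have Hmd : (m < d)%N := Hm.
pose jm := Ordinal Hmd.
have [ze Hze] := IH (ltnW Hm).
pose F := fun y => h y - inner ze (vsub y x).
pose V1 := fun y : vec d => forall i : 'I_d, (m.+1 <= i)%N -> y i = x i.
have Vm : forall y : vec d, V1 y -> y jm = x jm ->
    forall i : 'I_d, (m <= i)%N -> y i = x i.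
  move=> y Hy Hj i; rewrite leq_eqVlt => /orP [/eqP Ei | Hi]; last by apply: Hy.
  by have -> : i = jm by apply: val_inj; rewrite /= -Ei.
have key : forall y y', V1 y -> V1 y' -> x jm < y jm -> y' jm < x jm ->
    (h x - F y') / (x jm - y' jm) <= (F y - h x) / (y jm - x jm).
  move=> y y' Hy Hy' Hlt Hlt'.
  set s := y jm - x jm. set s' := x jm - y' jm.
  set t := s' / (s + s').
  have Ht : 0 <= t <= 1.
    have Et : t * (s + s') = s' by rewrite /t; field; rewrite /s /s'; lra.
    rewrite /s /s' in Et; split; nra.
  pose w := vadd (vscale t y) (vscale (1 - t) y').
  have Hw : forall i : 'I_d, (m <= i)%N -> w i = x i.
    move=> i; rewrite leq_eqVlt => /orP [/eqP Ei | Hi].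
      have -> : i = jm by apply: val_inj; rewrite /= -Ei.
      rewrite /w /vadd /vscale /t.
      have -> : y jm = x jm + s by rewrite /s; ring.
      have -> : y' jm = x jm - s' by rewrite /s'; ring.
      field; rewrite /s /s'; lra.
    rewrite /w /vadd /vscale Hy // Hy' //; ring.
  have H1 := Hze w Hw.
  have H2 := Hc y y' t Ht.
  rewrite (@inner_comb d ze (vsub y x) (vsub y' x) (vsub w x) t (1 - t)) in H1; last first.
    by move=> i; rewrite /w /vsub /vadd /vscale; ring.
  apply: div_helper; rewrite /s /s'; try lra.
  rewrite /F -/s -/s' -/t. fold w in H2. lra.
pose ej : vec d := fun i => if i == jm then 1 else 0.
pose E := fun r => exists y', V1 y' /\ y' jm < x jm /\ r = (h x - F y') / (x jm - y' jm).
have Vy0 : V1 (vadd x ej).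
  move=> i Hi; rewrite /vadd /ej.
  have -> : (i == jm) = false.
    apply/negbTE/eqP => Ei; move: Hi; rewrite Ei /= ltnn //.
  ring.
have Vy1 : V1 (vsub x ej).
  move=> i Hi; rewrite /vsub /ej.
  have -> : (i == jm) = false.
    apply/negbTE/eqP => Ei; move: Hi; rewrite Ei /= ltnn //.
  ring.
have ej1 : ej jm = 1 by rewrite /ej eqxx.
have Hb : bound E.
  exists ((F (vadd x ej) - h x) / (vadd x ej jm - x jm)) => r [y' [Hy' [Hl ->]]].
  apply: key => //; rewrite /vadd ej1; lra.
have Hne : exists r, E r.
  by exists ((h x - F (vsub x ej)) / (x jm - vsub x ej jm)); exists (vsub x ej);
     split => //; split => //; rewrite /vsub ej1; lra.
have [al [Hub Hlub]] := completeness E Hb Hne.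
exists (fun i => ze i + (if i == jm then al else 0)) => y Hy.
rewrite inner_basis.
have Hvj : vsub y x jm = y jm - x jm by [].
rewrite Hvj.
case: (total_order_T (y jm) (x jm)) => [[Hl|He]|Hg].
- have Hr : E ((h x - F y) / (x jm - y jm)) by exists y.
  have := Hub _ Hr.
  set r := (h x - F y) / (x jm - y jm) => Hra.
  have Er : h x - F y = r * (x jm - y jm) by rewrite /r; field; lra.
  have := Rmult_le_compat_r (x jm - y jm) _ _ (ltac:(lra)) Hra.
  rewrite /F in Er; nra.
- have := Hze y (Vm y Hy He). rewrite He; lra.
- have Hu : al <= (F y - h x) / (y jm - x jm).
    apply: Hlub => r [y' [Hy' [Hl' ->]]]; apply: key => //.
  set r := (F y - h x) / (y jm - x jm) in Hu.
  have Er : F y - h x = r * (y jm - x jm) by rewrite /r; field; lra.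
  have := Rmult_le_compat_r (y jm - x jm) _ _ (ltac:(lra)) Hu.
  rewrite /F in Er; nra.
Qed.

Lemma eps_le (a b c : R) : 0 <= c -> (forall eps, 0 < eps -> a <= b + eps * c) -> a <= b.
Proof.
move=> Hc H; apply: Rnot_lt_le => Hlt.
have He : 0 < (a - b) / (2 * (c + 1)).
  apply: Rmult_lt_0_compat; first lra.
  apply: Rinv_0_lt_compat; lra.
have := H _ He.
set e := (a - b) / (2 * (c + 1)).
have Ee : e * (2 * (c + 1)) = a - b by rewrite /e; field; lra.
nra.
Qed.

Lemma grad_ineq {d} (N : vec d -> R) g G : is_norm N -> rconvex g -> is_gradient N g G ->
  forall x y, g x + inner (G x) (vsub y x) <= g y.
Proof.
move=> [HN0 [_ [HNs _]]] Hc Hg x y.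
set hh := vsub y x.
suff: inner (G x) hh <= g y - g x by lra.
apply: (@eps_le _ _ (N hh)) => // eps Heps.
have [del [Hdel Hd]] := Hg x eps Heps.
set t := Rmin 1 (del / (2 * (N hh + 1))).
have Hdp : 0 < del / (2 * (N hh + 1)).
  apply: Rmult_lt_0_compat => //; apply: Rinv_0_lt_compat; have := HN0 hh; lra.
have Ht0 : 0 < t by apply: Rmin_glb_lt; lra.
have Ht1 : t <= 1 by apply: Rmin_l.
have Ht2 : t <= del / (2 * (N hh + 1)) by apply: Rmin_r.
have ENt : N (vscale t hh) = t * N hh by rewrite HNs Rabs_pos_eq //; lra.
have Hsmall : N (vscale t hh) < del.
  rewrite ENt.
  have E1 : del / (2 * (N hh + 1)) * (2 * (N hh + 1)) = del by field; have := HN0 hh; lra.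
  have := HN0 hh; nra.
have H1 := Hd _ Hsmall.
have Hin : inner (G x) (vscale t hh) = t * inner (G x) hh.
  rewrite (@inner_comb d (G x) hh hh (vscale t hh) t 0); first ring.
  by move=> i; rewrite /vscale; ring.
have Hv : vadd x (vscale t hh) = vadd (vscale t y) (vscale (1 - t) x).
  by apply: functional_extensionality => i; rewrite /vadd /vscale /hh /vsub; ring.
have H2 := Hc y x t (conj (Rlt_le _ _ Ht0) Ht1).
rewrite -Hv in H2.
rewrite Hin ENt in H1.
have H3 := Rle_abs (- (g (vadd x (vscale t hh)) - g x - t * inner (G x) hh)).
rewrite Rabs_Ropp in H3.
suff : t * inner (G x) hh <= t * (g y - g x + eps * N hh).
  move=> H4; apply: Rmult_le_reg_l Ht0 H4.
lra.
Qed.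

Lemma rpow_nonneg t s : 0 <= rpow t s.
Proof.
rewrite /rpow; case: Rle_dec => Hx /=; first lra.
rewrite /Rpower; left; apply: exp_pos.
Qed.

Lemma rpow_scale c n s : 0 < c -> 0 <= n -> rpow (c * n) s = Rpower c s * rpow n s.
Proof.
move=> Hc Hn; rewrite /rpow.
case: (Rle_dec n 0) => Hn0 /=.
  have -> : n = 0 by lra.
  rewrite Rmult_0_r; case: Rle_dec => Hz /=; [ring | lra].
case: Rle_dec => H /=.
  have : 0 < c * n by apply: Rmult_lt_0_compat; lra.
  lra.
by rewrite Rpower_mult_distr //; lra.
Qed.

Lemma pow_limit (K D q : R) : 0 < q -> 0 <= K ->
  (forall t, 0 < t < 1 -> Rpower (1 - t) q * K <= D) -> K <= D.
Proof.
move=> Hq HK Ht; apply: Rnot_lt_le => HDK.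
case: (Req_dec K 0) => HK0.
  have := Ht (1/2) ltac:(lra); rewrite HK0; lra.
have HKp : 0 < K by lra.
set r := (Rmax (D / K) 0 + 1) / 2.
have HDKl : D / K < 1.
  have E : D / K * K = D by field; lra.
  apply: (Rmult_lt_reg_r K _ _ HKp); rewrite E; lra.
have Hr0 : 0 < r by rewrite /r; have := Rmax_r (D/K) 0; lra.
have Hr1 : r < 1 by rewrite /r; have := Rmax_Rlt (D/K) 0 1; have := Rmax_r (D/K) 0; have := Rmax_l (D/K) 0; unfold Rmax; destruct (Rle_dec (D/K) 0); lra.
have HrD : D / K < r by rewrite /r; have := Rmax_l (D/K) 0; lra.
set rho := Rpower r (1 / q).
have Hrho0 : 0 < rho by rewrite /rho /Rpower; apply: exp_pos.
have Hrho1 : rho < 1.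
  rewrite /rho /Rpower -[X in _ < X]exp_0; apply: exp_increasing.
  have : ln r < 0 by rewrite -ln_1; apply: ln_increasing.
  have : 0 < 1 / q by apply: Rmult_lt_0_compat; [lra | apply: Rinv_0_lt_compat].
  move=> Ha Hl; have := Rmult_lt_0_compat (1 / q) (- ln r) Ha ltac:(lra); lra.
have := Ht (1 - rho) ltac:(lra).
have -> : 1 - (1 - rho) = rho by ring.
rewrite /rho Rpower_mult.
have -> : 1 / q * q = 1 by field; lra.
rewrite Rpower_1 //.
have : D < r * K.
  have := Rmult_lt_compat_r K _ _ HKp HrD.
  have -> : D / K * K = D by field; lra.
  done.
lra.
Qed.

Lemma min_uc {d} (N : vec d -> R) q gam (h : vec d -> R) (c : efun d) (z : vec d) cz :
  is_norm N -> 0 < q -> 0 <= gam -> rconvex h ->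
  unif_convex N q gam (fun x => Some (h x)) -> econvex c -> c z = Some cz ->
  (forall y cy, c y = Some cy -> h z + cz <= h y + cy) ->
  forall y cy, c y = Some cy -> h z + cz + gam / q * rpow (N (vsub y z)) q <= h y + cy.
Proof.
move=> [HN0 [_ [HNs _]]] Hq Hg Hh Huc Hc Hcz Hmin y cy Hcy.
set e := vsub y z. set M := rpow (N e) q.
have HM : 0 <= M by apply: rpow_nonneg.
have Hgq : 0 <= gam / q by apply: Rmult_le_pos => //; left; apply: Rinv_0_lt_compat.
suff : gam / q * M <= h y + cy - (h z + cz) by lra.
apply: (@pow_limit _ _ q) => //; first by apply: Rmult_le_pos.
move=> t Ht.
have := Hc y z t Ht.
rewrite Hcy Hcz /=.
set yt := vadd (vscale t y) (vscale (1 - t) z).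
case Eyt: (c yt) => [ct|] //= Hct.
have Hm := Hmin yt ct Eyt.
have [ze Hze] := subgrad_exists h Hh yt.
have Hsg : subgrad (fun x => Some (h x)) yt ze.
  by exists (h yt); split => // w; apply: Hze.
have U1 := Huc yt z ze (h yt) erefl Hsg.
have U2 := Huc yt y ze (h yt) erefl Hsg.
simpl in U1, U2.
have I1 : inner ze (vsub z yt) = - t * inner ze e.
  rewrite (@inner_comb d ze e e (vsub z yt) (- t) 0); first ring.
  by move=> i; rewrite /e /yt /vsub /vadd /vscale; ring.
have I2 : inner ze (vsub y yt) = (1 - t) * inner ze e.
  rewrite (@inner_comb d ze e e (vsub y yt) (1 - t) 0); first ring.
  by move=> i; rewrite /e /yt /vsub /vadd /vscale; ring.
have EN : vsub y yt = vscale (1 - t) e.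
  by apply: functional_extensionality => i; rewrite /e /yt /vsub /vadd /vscale; ring.
rewrite I1 in U1; rewrite I2 EN HNs Rabs_pos_eq in U2; last lra.
rewrite rpow_scale in U2; [|lra|apply: HN0].
fold M in U2.
have R1 := rpow_nonneg (N (vsub z yt)) q.
set P := Rpower (1 - t) q in U2 *.
set I := inner ze e in U1 U2.
set R1v := rpow (N (vsub z yt)) q in U1 R1.
have A1 : (1 - t) * (h yt + - t * I) <= (1 - t) * h z.
  apply: Rmult_le_compat_l; first lra.
  have : 0 <= gam / q * R1v by apply: Rmult_le_pos.
  lra.
have A2 : t * (h yt + (1 - t) * I + gam / q * (P * M)) <= t * h y.
  apply: Rmult_le_compat_l; lra.
suff : t * (P * (gam / q * M)) <= t * (h y + cy - (h z + cz)).
  by apply: Rmult_le_reg_l; lra.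
have Ect : t * cy + (1 - t) * cz >= ct by lra.
lra.
Qed.

Fixpoint cc {d} (g : vec d -> R) (G : vec d -> vec d) (l : efun d)
  (a : nat -> R) (xs : nat -> vec d) (m : nat) : efun d :=
  match m with
  | O => fun _ => Some 0
  | S m' => fun y => eplus (cc g G l a xs m' y) (escale (a (S m')) (fhat g G l y (xs (S m'))))
  end.

Lemma psi_cc {d} g G l h a xs m (y : vec d) :
  psi g G l h a xs m y = eplus (Some (h y)) (cc g G l a xs m y).
Proof.
elim: m => [|m IH] /=; first by rewrite Rplus_0_r.
rewrite IH; case: (cc g G l a xs m y) => [c|] //=;
case: (escale _ _) => [e|] //=; by rewrite Rplus_assoc.
Qed.

Ltac split_opts :=
  repeat match goal with
  | |- context [match ?X with Some _ => _ | None => _ end] => destruct X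
  end.

Lemma econvex_plus {d} (f1 f2 : efun d) : econvex f1 -> econvex f2 ->
  econvex (fun y => eplus (f1 y) (f2 y)).
Proof.
move=> H1 H2 x y t Ht; move: (H1 x y t Ht) (H2 x y t Ht).
set w := vadd _ _.
destruct (f1 w), (f2 w), (f1 x), (f1 y), (f2 x), (f2 y); simpl; intros; try lra; try tauto.
Qed.

Lemma econvex_scale {d} (c : R) (f : efun d) : 0 < c -> econvex f ->
  econvex (fun y => escale c (f y)).
Proof.
move=> Hc H x y t Ht; move: (H x y t Ht).
set w := vadd _ _.
destruct (f w), (f x), (f y); simpl; intros; try tauto.
have := Rmult_le_compat_l c _ _ (Rlt_le _ _ Hc) H0; lra.
Qed.

Lemma econvex_fhat {d} g G (l : efun d) x0 : econvex l -> econvex (fun y => fhat g G l y x0).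
Proof.
move=> Hl; rewrite /fhat.
apply: (econvex_plus (fun y => Some (g x0 + inner (G x0) (vsub y x0))) l) => //.
move=> x y t Ht /=.
rewrite (@inner_comb d (G x0) (vsub x x0) (vsub y x0) _ t (1 - t)); first lra.
by move=> i; rewrite /vsub /vadd /vscale; ring.
Qed.

Lemma econvex_cc {d} g G (l : efun d) a xs m : econvex l -> (forall i, i <> O -> 0 < a i) ->
  econvex (cc g G l a xs m).
Proof.
move=> Hl Ha; elim: m => [|m IH] /=.
  by move=> x y t Ht /=; lra.
apply: econvex_plus => //; apply: econvex_scale; first by apply: Ha.
exact: econvex_fhat.
Qed.

Lemma Acum_nonneg a k : (forall i, i <> O -> 0 < a i) -> 0 <= Acum a k.
Proof.
move=> Ha; elim: k => [|k IH] /=; first lra.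
have := Ha k.+1 ltac:(discriminate); lra.
Qed.

Theorem mainTheorem7
  (d : nat) (N : vec d -> R) (HN : is_norm N)
  (g : vec d -> R) (G : vec d -> vec d) (l : efun d)
  (Hg_conv : rconvex g) (Hg_grad : is_gradient N g G)
  (Hl_prop : proper l) (Hl_conv : econvex l) (Hl_closed : eclosed l)
  (q gamma : R) (Hq : 2 <= q) (Hgamma : 0 < gamma)
  (x0 : vec d) (Hx0 : in_dom l x0)
  (h : vec d -> R) (Hh_conv : rconvex h)
  (Hh_nonneg : forall x, 0 <= h x) (Hh_zero : forall x, h x = 0 <-> x = x0)
  (Hh_uc : unif_convex N q gamma (fun x => Some (h x)))
  (a : nat -> R) (Ha : forall i, i <> O -> 0 < a i)
  (xs : nat -> vec d) (Hxs0 : xs O = x0)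
  (Hxs : forall i, i <> O -> in_dom_subdiff l (xs i))
  (z : nat -> vec d) (Hz0 : z O = x0)
  (Hz : forall k, k <> O ->
     exists m, psi g G l h a xs k (z k) = Some m /\
       forall y, ele (Some m) (psi g G l h a xs k y))
  (u : nat -> vec d)
  (Hu : forall i, i <> O -> exists w, subgrad l (xs i) w /\ u i = vadd (G (xs i)) w)
  (k : nat) (Hk : k <> O) :
  let A := Acum a in
  let E := fun i =>
     A i * inner (u i) (vsub (vsub (xs i) (vscale (a i / A i) (z i)))
                             (vscale (A (Nat.pred i) / A i) (xs (Nat.pred i))))
     - gamma / q * rpow (N (vsub (z i) (z (Nat.pred i)))) q in
  exists fk pk,
    fsum g l (xs k) = Some fk /\ psi g G l h a xs k (z k) = Some pk /\
    A k * fk - pk <= sum1 E k.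
Proof.
move=> A E.
have Hmin : forall m, exists czm, cc g G l a xs m (z m) = Some czm /\
    forall y cy, cc g G l a xs m y = Some cy -> h (z m) + czm <= h y + cy.
  case=> [|m].
    exists 0; split => // y cy /= [<-].
    have := Hh_nonneg y; have := proj2 (Hh_zero x0) erefl; rewrite Hz0; lra.
  have [mm [Hm1 Hm2]] := Hz m.+1 ltac:(discriminate).
  rewrite psi_cc in Hm1.
  case Ec: (cc g G l a xs m.+1 (z m.+1)) Hm1 => [c|] //; move=> /= [Em].
  exists c; split => // y cy Ecy.
  have := Hm2 y; rewrite psi_cc; simpl in Ecy |- *; rewrite Ecy /= -Em //.
suff: forall k, exists fk pk,
    fsum g l (xs k) = Some fk /\ psi g G l h a xs k (z k) = Some pk /\
    A k * fk - pk <= sum1 E k by move=> /(_ k).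
elim=> [|m [fk [pk [Hfk [Hpk IH]]]]].
  have [l0 Hl0] := Hx0.
  exists (g x0 + l0), 0; rewrite /fsum Hxs0 Hl0 /=; split => //; split.
    by rewrite Hz0; have := proj2 (Hh_zero x0) erefl => ->.
  rewrite /A /=; lra.
have Hm1 : m.+1 <> O by discriminate.
have [w [[lx1 [Hlx1 Hsw]] Hux]] := Hu _ Hm1.
set x1 := xs m.+1 in Hlx1 Hsw Hux *.
set z1 := z m.+1.
have [p [Hp _]] := Hz _ Hm1.
have Hp' := Hp.
rewrite /= -/x1 -/z1 in Hp'.
case Epa: (psi g G l h a xs m z1) Hp' => [pa|] //.
rewrite /fhat.
case Elz: (l z1) => [lz|] //= [Ep].
have [czm [Hczm Hczm2]] := Hmin m.
have Epk := Hpk; rewrite psi_cc Hczm /= in Epk; case: Epk => Epk.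
have Epa' := Epa; rewrite psi_cc in Epa'.
case Ecy: (cc g G l a xs m z1) Epa' => [cy|] //= [Epa2].
have Huc := @min_uc d N q gamma h (cc g G l a xs m) (z m) czm HN ltac:(lra) ltac:(lra)
  Hh_conv Hh_uc (econvex_cc g G l a xs m Hl_conv Ha) Hczm Hczm2 z1 cy Ecy.
move: Hfk; rewrite /fsum; case Elk: (l (xs m)) => [lk|] //= [Efk].
exists (g x1 + lx1), p; split; first by rewrite /fsum Hlx1.
split; first exact: Hp.
have S1 := Hsw (xs m); rewrite Elk /= in S1.
have S2 := Hsw z1; rewrite Elz /= in S2.
have Gi := grad_ineq N g G HN Hg_conv Hg_grad x1 (xs m).
have HAm : 0 <= A m := Acum_nonneg a m Ha.
have Ham := Ha _ Hm1.
idtac.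
set S := sum1 E m in IH *.
have EA : A m.+1 = A m + a m.+1 by [].
rewrite /E /= -/x1 -/z1 EA.
set Am := A m in IH HAm *.
set am := a m.+1 in Ham *.
set I1 := inner (u m.+1) (vsub (xs m) x1).
set I2 := inner (u m.+1) (vsub z1 x1).
have EI1 : I1 = inner (G x1) (vsub (xs m) x1) + inner w (vsub (xs m) x1).
  by rewrite /I1 Hux inner_addl.
have EI2 : I2 = inner (G x1) (vsub z1 x1) + inner w (vsub z1 x1).
  by rewrite /I2 Hux inner_addl.
have Hpos : 0 < Am + am by lra.
have EV : inner (u m.+1) (vsub (vsub x1 (vscale (am / (Am + am)) z1)) (vscale (Am / (Am + am)) (xs m)))
        = (- Am / (Am + am)) * I1 + (- am / (Am + am)) * I2.
  rewrite /I1 /I2; apply: inner_comb => i.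
  rewrite /vsub /vscale; field; lra.
rewrite EV.
have EV2 : (Am + am) * (- Am / (Am + am) * I1 + - am / (Am + am) * I2) = - Am * I1 - am * I2.
  by field; lra.
rewrite EV2.
have P1 : Am * (g x1 + lx1 + I1) <= Am * fk.
  apply: Rmult_le_compat_l => //; rewrite -Efk EI1; lra.
have P2 : am * (g x1 + lx1 + I2) <= am * (g x1 + inner (G x1) (vsub z1 x1) + lz).
  apply: Rmult_le_compat_l; [lra | rewrite EI2; lra].
rewrite -Ep -Epa2 -Epk in IH *.
rewrite -/am.
lra.
Qed.
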